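(* Let $F$ be a field and let $R$ be an $F$-algebra which satisfies (NK). Then there exists an $F$-subalgebra $A$ of $R$ which satisfies (NK) and such that $\dim_F(A)\le\omega$ (i.e. $A$ has countable dimension over $F$).
   Context: All rings are associative with unit. A right ideal is nil if all its elements are nilpotent. A ring satisfies the condition (NK) if it contains two nil right ideals whose sum is not nil. *)

(* Defs.v *)
From HB Require Import structures.
From mathcomp Require Import all_boot all_order all_algebra.
Set Implicit Arguments. Unset Strict Implicit. Unset Printing Implicit Defensive.
Import GRing.Theory.
Local Open Scope ring_scope.

Definition nilpotent_elt (R : pzRingType) (x : R) : Prop := exists n : nat, x ^+ n = 0.

Definition right_ideal_in (R : pzRingType) (S I : R -> Prop) : Prop :=
  (forall x, I x -> S x) /\ I 0 /\
  (forall x y, I x -> I y -> I (x - y)) /\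
  (forall x r, I x -> S r -> I (x * r)).

Definition nil_set (R : pzRingType) (I : R -> Prop) : Prop :=
  forall x, I x -> nilpotent_elt x.

Definition set_sum (R : pzRingType) (I J : R -> Prop) : R -> Prop :=
  fun z => exists x y, I x /\ J y /\ z = x + y.

Definition NK_in (R : pzRingType) (S : R -> Prop) : Prop :=
  exists I J : R -> Prop, right_ideal_in S I /\ right_ideal_in S J /\
    nil_set I /\ nil_set J /\ ~ nil_set (set_sum I J).

Definition NK (R : pzRingType) : Prop := NK_in (fun _ : R => True).

Definition subalgebra (F : fieldType) (R : algType F) (A : R -> Prop) : Prop :=
  A 0 /\ A 1 /\ (forall x y, A x -> A y -> A (x + y)) /\
  (forall x y, A x -> A y -> A (x * y)) /\
  (forall (c : F) x, A x -> A (c *: x)).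

(* A has dimension at most omega over F: it is the F-span of a countable family. *)
Definition countable_dim (F : fieldType) (R : algType F) (A : R -> Prop) : Prop :=
  exists b : nat -> R, forall x,
    A x <-> exists (n : nat) (c : nat -> F), x = \sum_(i < n) c i *: b i.

(* Main.v *)
Require Import Defs.
From mathcomp Require Import all_boot all_order all_algebra.
From Stdlib Require Classical_Prop.
Set Implicit Arguments. Unset Strict Implicit. Unset Printing Implicit Defensive.
Import GRing.Theory.
Local Open Scope ring_scope.

Section Aux.
Variables (F : fieldType) (R : algType F).

Definition spanb (b : nat -> R) (z : R) : Prop :=
  exists (n : nat) (c : nat -> F), z = \sum_(i < n) c i *: b i.

Lemma sum_pad (b : nat -> R) (c : nat -> F) n N : (n <= N)%N ->
  \sum_(i < n) c i *: b i = \sum_(i < N) (if (i < n)%N then c i else 0) *: b i.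
Proof.
move=> H; rewrite (big_ord_widen N (fun i => c i *: b i) H) big_mkcond /=.
by apply: eq_bigr => i _; case: ifP => //; rewrite scale0r.
Qed.

Lemma span0 b : spanb b 0.
Proof. by exists 0%N, (fun _ => 0); rewrite big_ord0. Qed.

Lemma spanD b x y : spanb b x -> spanb b y -> spanb b (x + y).
Proof.
move=> [n [c ->]] [m [d ->]].
exists (maxn n m), (fun i => (if (i < n)%N then c i else 0) + (if (i < m)%N then d i else 0)).
rewrite (sum_pad b c (leq_maxl n m)) (sum_pad b d (leq_maxr n m)) -big_split /=.
by apply: eq_bigr => i _; rewrite scalerDl.
Qed.

Lemma spanZ b k x : spanb b x -> spanb b (k *: x).
Proof.
move=> [n [c ->]]; exists n, (fun i => k * c i).
by rewrite scaler_sumr; apply: eq_bigr => i _; rewrite scalerA.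
Qed.

Lemma span_b b k : spanb b (b k).
Proof.
exists k.+1, (fun i => if i == k then 1 else 0).
rewrite big_ord_recr /= eqxx scale1r big1 ?add0r // => i _.
by rewrite (ltn_eqF (ltn_ord i)) scale0r.
Qed.

Lemma span_sum b n (f : 'I_n -> R) : (forall i, spanb b (f i)) ->
  spanb b (\sum_(i < n) f i).
Proof.
elim: n f => [|n IH] f H; first by rewrite big_ord0; exact: span0.
by rewrite big_ord_recr; apply: spanD => //; apply: IH.
Qed.
Lemma span_sum_old b n (f : nat -> R) : (forall i, spanb b (f i)) ->
  spanb b (\sum_(i < n) f i).
Proof.
move=> H; elim: n => [|n IH]; first by rewrite big_ord0; exact: span0.
by rewrite big_ord_recr; apply: spanD.
Qed.

Lemma spanM b x y : (forall i j, spanb b (b i * b j)) ->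
  spanb b x -> spanb b y -> spanb b (x * y).
Proof.
move=> Hb [n [c ->]] [m [d ->]].
rewrite mulr_suml; apply: span_sum => i.
rewrite mulr_sumr; apply: span_sum => j.
by rewrite -scalerAl -scalerAr; do 2 apply: spanZ.
Qed.

Definition word (x y : R) (w : seq bool) : R :=
  \prod_(i <- w) (if i then x else y).

Definition bb (x y : R) (n : nat) : R :=
  match @unpickle (seq bool) n with Some w => word x y w | None => 0 end.

Lemma bb_pickle x y w : bb x y (pickle w) = word x y w.
Proof. by rewrite /bb pickleK. Qed.

Lemma bbM x y i j : spanb (bb x y) (bb x y i * bb x y j).
Proof.
rewrite /bb; case: (unpickle i) => [w1|]; last by rewrite mul0r; apply: span0.
case: (unpickle j) => [w2|]; last by rewrite mulr0; apply: span0.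
rewrite /word -big_cat -[X in spanb _ X]/(word x y (w1 ++ w2)) -bb_pickle.
exact: span_b.
Qed.

End Aux.

Theorem mainTheorem3 (F : fieldType) (R : algType F) :
  NK R ->
  exists A : R -> Prop, subalgebra A /\ NK_in A /\ countable_dim A.
Proof.
move=> [I [J [HI [HJ [nI [nJ nIJ]]]]]].
have [z [[x [y [Ix [Jy ez]]]] nz]] : exists z, set_sum I J z /\ ~ nilpotent_elt z.
  apply: Classical_Prop.NNPP => H; apply: nIJ => z Hz.
  apply: Classical_Prop.NNPP => Hn; apply: H; by exists z; split.
set A := spanb (bb x y).
have Ax : A x.
  have -> : x = bb x y (@pickle (seq bool) [:: true]) by rewrite bb_pickle /word big_seq1.
  exact: span_b.
have Ay : A y.
  have -> : y = bb x y (@pickle (seq bool) [:: false]) by rewrite bb_pickle /word big_seq1.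
  exact: span_b.
have A1 : A 1.
  have -> : 1 = bb x y (@pickle (seq bool) [::]) by rewrite bb_pickle /word big_nil.
  exact: span_b.
have AM : forall u v, A u -> A v -> A (u * v) by move=> u v; apply: spanM; apply: bbM.
have AD : forall u v, A u -> A v -> A (u + v) by move=> u v; apply: spanD.
have AZ : forall (c : F) u, A u -> A (c *: u) by move=> c u; apply: spanZ.
have AN : forall u, A u -> A (- u).
  by move=> u Hu; rewrite -scaleN1r; apply: AZ.
have A0 : A 0 by apply: span0.
have rid : forall K : R -> Prop, right_ideal_in (fun _ => True) K ->
    right_ideal_in A (fun u => K u /\ A u).
  move=> K [_ [K0 [KB KM]]]; split; first by move=> u [].
  split; first by split.
  split; first by move=> u v [Ku Au] [Kv Av]; split; [apply: KB | apply: AD => //; apply: AN].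
  by move=> u r [Ku Au] Ar; split; [apply: KM | apply: AM].
have SA : subalgebra A by split; [|split; [|split; [|split]]].
exists A; split; first exact: SA.
split; last by exists (bb x y).
exists (fun u => I u /\ A u), (fun u => J u /\ A u).
split; first exact: rid.
split; first exact: rid.
split; first by move=> u [Iu _]; apply: nI.
split; first by move=> u [Ju _]; apply: nJ.
move=> H; apply: nz; apply: H; exists x, y; by split.
Qed.
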